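(* Consider a sequence of problems indexed by $n$ with a fixed integer $m\ge1$, a support set $\mathcal{S}\subseteq\{1,\dots,n\}$ of size $s=s(n)$, a fixed rate $\theta_1>0$ and a rate $\theta_0=\theta_0(n)>\theta_1$. Observations of component $i$ are i.i.d. $\mathrm{Poisson}(\theta_0)$ if $i\notin\mathcal{S}$ and i.i.d. $\mathrm{Poisson}(\theta_1)$ if $i\in\mathcal{S}$, independent across components and draws. Run (reversed) sequential thresholding with $K=(1+\epsilon)\log_2 n$ passes, $\epsilon>0$: set $\mathcal{S}_0=\{1,\dots,n\}$; for $k=1,\dots,K$, for each $i\in\mathcal{S}_{k-1}$ take $m$ fresh observations, compute $T^{(k)}_{i,m}=\sum_{j=1}^m y^{(k)}_{i,j}$, and set $\mathcal{S}_k=\{i\in\mathcal{S}_{k-1}:T^{(k)}_{i,m}<\mathrm{median}(\mathrm{Poisson}(m\theta_0))\}$. If $\theta_0>\frac{\log(s\log_2 n)+1}{m}$, then sequential thresholding is reliable, i.e. $\lim_{n\to\infty}\mathbb{P}(\mathcal{S}_K\neq\mathcal{S})=0$.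
   Context: A support estimator $\widehat{\mathcal{S}}(n)$ is reliable if $\lim_{n\to\infty}\mathbb{P}(\widehat{\mathcal{S}}(n)\neq\mathcal{S}(n))=0$. The inequality on $\theta_0$ is understood as a condition on the growth of $\theta_0(n)$ with $n$. *)

(* Defs.v *)
From HB Require Import structures.
From mathcomp Require Import all_boot all_order all_algebra.
From mathcomp Require Import all_classical all_reals all_analysis.
Set Implicit Arguments. Unset Strict Implicit. Unset Printing Implicit Defensive.
Import Order.TTheory GRing.Theory Num.Theory.
Local Open Scope classical_set_scope.
Local Open Scope ring_scope.

Section SeqThresh.
Variable R : realType.

(* Outcome of the experiment: all observations y^{(k)}_{i,j} for component
   i < n, pass k < K, draw j < m (all drawn up front; pass k only uses the
   observations of components still alive, which is the same as taking
   fresh observations). *)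
Definition obs_space (n K m : nat) := {ffun 'I_n * 'I_K * 'I_m -> nat}.

Definition stat (n K m : nat) (y : obs_space n K m) (i : 'I_n) (k : 'I_K) : nat :=
  (\sum_(j < m) y (i, k, j))%N.

Definition seq_thresh (n K m : nat) (y : obs_space n K m) (thr : nat) : {set 'I_n} :=
  foldl (fun (S : {set 'I_n}) (k : 'I_K) => [set i in S | (stat y i k < thr)%N])
        [set: 'I_n]%SET (enum 'I_K).

Definition comp_rate (n : nat) (th0 th1 : R) (S : {set 'I_n}) (i : 'I_n) : R :=
  if i \in S then th1 else th0.

Definition obs_pmf (n K m : nat) (th0 th1 : R) (S : {set 'I_n})
  (y : obs_space n K m) : R :=
  \prod_(t : 'I_n * 'I_K * 'I_m) poisson_pmf (comp_rate th0 th1 S t.1.1) (y t).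

Definition error_prob (n K m : nat) (th0 th1 : R) (S : {set 'I_n}) (thr : nat)
  : \bar R :=
  \esum_(y in [set y : obs_space n K m | seq_thresh y thr != S])
     (obs_pmf th0 th1 S y)%:E.

Definition is_poisson_median (lam : R) (M : nat) : Prop :=
  1 / 2 <= \sum_(k < M.+1) poisson_pmf lam k /\
  1 / 2 <= 1 - \sum_(k < M) poisson_pmf lam k.

Definition log2 (x : R) : R := ln x / ln 2.

Definition passes (eps : R) (n : nat) : nat :=
  `|Num.ceil ((1 + eps) * log2 n%:R)|%N.

End SeqThresh.

(* Main.v *)
Require Import Defs.
From HB Require Import structures.
From mathcomp Require Import all_boot all_order all_algebra.
From mathcomp Require Import all_classical all_reals all_analysis.
From mathcomp Require Import ring lra.
Set Implicit Arguments. Unset Strict Implicit. Unset Printing Implicit Defensive.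
Import Order.TTheory GRing.Theory Num.Theory.
Local Open Scope classical_set_scope.
Local Open Scope ring_scope.

Section S.
Variable R : realType.

Lemma exp_partial (x : R) N : 0 <= x -> \sum_(k < N) x ^+ k / k`!%:R <= expR x.
Proof.
move=> x0; rewrite /expR.
have := @nondecreasing_cvgn_le _ (series (exp_coeff x)) _ (is_cvg_series_exp_coeff x) N.
rewrite /series /= big_mkord; apply.
apply: nondecreasing_series => n _ _.
by rewrite /exp_coeff /= divr_ge0// exprn_ge0.
Qed.

Definition qp (r : R) (t : nat) : R := r ^+ t / t`!%:R * expR (- r).

Lemma qp_ge0 r t : 0 <= r -> 0 <= qp r t.
Proof. by move=> r0; rewrite /qp mulr_ge0 ?expR_ge0// divr_ge0// exprn_ge0. Qed.

Lemma poisE r t : 0 < r -> poisson_pmf r t = qp r t.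
Proof. by move=> r0; rewrite /poisson_pmf r0. Qed.

Lemma qp_conv a b t : \sum_(j < t.+1) qp a j * qp b (t - j) = qp (a + b) t.
Proof.
rewrite /qp addrC exprDn opprD expRD mulr_suml mulr_suml.
apply: eq_bigr => i _.
have hi : (i <= t)%N by rewrite -ltnS.
have hb := bin_fact hi.
have f1 : (i`!%:R : R) != 0 by rewrite pnatr_eq0 -lt0n fact_gt0.
have f2 : ((t - i)`!%:R : R) != 0 by rewrite pnatr_eq0 -lt0n fact_gt0.
have f3 : ('C(t, i)%:R : R) != 0 by rewrite pnatr_eq0 -lt0n bin_gt0.
rewrite -hb !natrM mulr_natr.
field.
by rewrite f1 f2 f3.
Qed.

Lemma coef_pow (r : R) N m t : 0 <= r ->
  0 <= ((\poly_(a < N) qp r a) ^+ m)`_t <= qp (m%:R * r) t.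
Proof.
move=> r0; elim: m t => [|m IH] t.
  rewrite expr0 coef1 /qp /= mul0r expr0n oppr0 expR0 mulr1.
  by case: t => [|t]//=; rewrite ?divr1 ?ler01 ?mul0r ?lexx.
rewrite exprS coefM -natr1 mulrDl mul1r addrC -qp_conv.
apply/andP; split.
  apply: sumr_ge0 => j _; rewrite mulr_ge0//; last by case/andP: (IH (t - j)%N) => ->.
  by rewrite coef_poly; case: ifP => // _; exact: qp_ge0.
apply: ler_sum => j _; apply: ler_pM.
- by rewrite coef_poly; case: ifP => // _; exact: qp_ge0.
- by case/andP: (IH (t - j)%N) => ->.
- by rewrite coef_poly; case: ifP => _; [exact: lexx | exact: qp_ge0].
- by case/andP: (IH (t - j)%N).
Qed.


Lemma block_mgf (J : finType) N (c : nat -> R) (z : R) :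
  \sum_(h : {ffun J -> 'I_N}) (\prod_j c (h j)) * z ^+ (\sum_j (h j : nat))
  = (\sum_(a < N) c a * z ^+ a) ^+ #|J|.
Proof.
rewrite -prodr_const bigA_distr_bigA; apply: eq_bigr => h _.
by rewrite -prodrXr -big_split.
Qed.

Lemma prod_polyE (J : finType) N (c : nat -> R) :
  (\poly_(a < N) c a) ^+ #|J| =
  \sum_(h : {ffun J -> 'I_N}) (\prod_j c (h j)) *: 'X^(\sum_j (h j : nat)).
Proof.
rewrite poly_def -prodr_const bigA_distr_bigA; apply: eq_bigr => h _.
under eq_bigr do rewrite -mul_polyC.
by rewrite -mul_polyC big_split /= rmorph_prod prodrXr.
Qed.

Lemma block_lt (J : finType) N M (c : nat -> R) :
  \sum_(h : {ffun J -> 'I_N}) (\prod_j c (h j)) * ((\sum_j (h j : nat)) < M)%N%:R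
  = \sum_(t < M) ((\poly_(a < N) c a) ^+ #|J|)`_t.
Proof.
under [RHS]eq_bigr do rewrite prod_polyE coef_sumMXn big_mkcond /=.
rewrite exchange_big /=; apply: eq_bigr => h _.
rewrite -big_mkcond /=.
rewrite (eq_bigl (fun t : 'I_M => (t : nat) == \sum_j (h j : nat))); last first.
  by move=> t; rewrite eq_sym.
rewrite (big_ord1_eq _ (fun _ => \prod_j c (h j))); case: ifP => _; by rewrite ?mulr1 ?mulr0.
Qed.

Lemma pmf_mgf (r z : R) N : 0 < r -> 0 <= z ->
  \sum_(a < N) poisson_pmf r a * z ^+ a <= expR (- r) * expR (r * z).
Proof.
move=> r0 z0.
rewrite (eq_bigr (fun a : 'I_N => expR (- r) * ((r * z) ^+ a / a`!%:R))); last first.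
  by move=> a _; rewrite poisE // /qp exprMn; ring.
rewrite -mulr_sumr ler_pM2l ?expR_gt0 //; apply: exp_partial.
by rewrite mulr_ge0 // ltW.
Qed.

Lemma pmf_sum_le1 (r : R) N : 0 < r -> \sum_(a < N) poisson_pmf r a <= 1.
Proof.
move=> r0; have := pmf_mgf N r0 ler01.
rewrite mulr1 mulrC expRxMexpNx_1.
by under eq_bigr do rewrite expr1n mulr1.
Qed.

Lemma med_low (l : R) (M : nat) : 0 < l ->
  1 / 2 <= \sum_(k < M.+1) poisson_pmf l k ->
  1 / 2 <= expR (M%:R) * (expR (- l) * expR (l * expR (-1))).
Proof.
move=> l0 h; apply: (le_trans h).
apply: (@le_trans _ _ (\sum_(k < M.+1) (poisson_pmf l k * expR (-1) ^+ k) * expR (M%:R))).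
  apply: ler_sum => k _.
  rewrite -mulrA ler_peMr ?poisson_pmf_ge0 //.
  rewrite -expRM_natl -expRD -[leLHS]addr0 (le_trans _ (expR_ge1Dx _)) // lerD2l.
  rewrite mulrN1 addrC subr_ge0 ler_nat; by rewrite -ltnS.
rewrite -mulr_suml mulrC ler_pM2l ?expR_gt0 //; apply: pmf_mgf => //.
Qed.

Lemma ind_le_pow (z : R) (M S : nat) : 1 <= z -> (M <= S)%N%:R <= z ^+ S / z ^+ M.
Proof.
move=> z1; have z0 : 0 < z by apply: lt_le_trans z1.
case: leqP => hMS.
  rewrite -(subnKC hMS) exprD mulrC mulKf ?expf_neq0 ?gt_eqF //.
  exact: exprn_ege1.
by rewrite divr_ge0 // exprn_ge0 // ltW.
Qed.

Lemma block_up (J : finType) N M (th z : R) : 0 < th -> 1 <= z ->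
  \sum_(h : {ffun J -> 'I_N}) (\prod_j poisson_pmf th (h j)) * (M <= \sum_j (h j : nat))%N%:R
  <= (expR (- th) * expR (th * z)) ^+ #|J| / z ^+ M.
Proof.
move=> th0 z1; have z0 : 0 < z by apply: lt_le_trans z1.
apply: (@le_trans _ _ (\sum_(h : {ffun J -> 'I_N})
    (\prod_j poisson_pmf th (h j)) * (z ^+ (\sum_j (h j : nat)) / z ^+ M))).
  apply: ler_sum => h _; apply: ler_wpM2l; last exact: ind_le_pow.
  by apply: prodr_ge0 => j _; exact: poisson_pmf_ge0.
under eq_bigr do rewrite mulrA.
rewrite -mulr_suml block_mgf ler_wpM2r ?invr_ge0 ?exprn_ge0 ?(ltW z0) //.
apply: lerXn2r; rewrite ?nnegrE ?mulr_ge0 ?expR_ge0 //.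
  by apply: sumr_ge0 => a _; rewrite mulr_ge0 ?poisson_pmf_ge0 ?exprn_ge0 ?(ltW z0).
by apply: pmf_mgf; rewrite ?ltW.
Qed.

Lemma block_one (J : finType) N (th : R) : 0 < th ->
  0 <= \sum_(h : {ffun J -> 'I_N}) (\prod_j poisson_pmf th (h j)) <= 1.
Proof.
move=> th0; apply/andP; split.
  by apply: sumr_ge0 => h _; apply: prodr_ge0 => j _; exact: poisson_pmf_ge0.
have := block_mgf J N (poisson_pmf th) 1.
under eq_bigr do rewrite expr1n mulr1.
move=> ->; apply: exprn_ile1.
  by apply: sumr_ge0 => a _; rewrite expr1n mulr1 poisson_pmf_ge0.
by under eq_bigr do rewrite expr1n mulr1; exact: pmf_sum_le1.
Qed.

Lemma block_low (J : finType) N M (l : R) : 0 < l -> (0 < #|J|)%N ->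
  \sum_(h : {ffun J -> 'I_N}) (\prod_j poisson_pmf l (h j)) * ((\sum_j (h j : nat)) < M)%N%:R
  <= \sum_(t < M) poisson_pmf (#|J|%:R * l) t.
Proof.
move=> l0 J0; rewrite block_lt.
rewrite (@eq_poly _ N _ (qp l)); last by move=> i _; rewrite poisE.
apply: ler_sum => t _; rewrite poisE; last by rewrite mulr_gt0 // ltr0n.
by case/andP: (coef_pow N #|J| t (ltW l0)).
Qed.
End S.

Section C.
Variable R : realType.

Lemma seq_threshE n K m (y : obs_space n K m) thr :
  seq_thresh y thr = [set i | [forall k, (stat y i k < thr)%N]]%SET.
Proof.
rewrite /seq_thresh.
have gen : forall (s : seq 'I_K) (A : {set 'I_n}),
  foldl (fun (S : {set 'I_n}) (k : 'I_K) => [set i in S | (stat y i k < thr)%N]) A s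
  = [set i in A | all (fun k => (stat y i k < thr)%N) s]%SET.
  elim=> [|k s IH] A /=.
    by apply/setP => i; rewrite !inE andbT.
  rewrite IH; apply/setP => i; rewrite !inE; by rewrite andbA.
rewrite gen; apply/setP => i; rewrite !inE /=.
apply/allP/forallP => [h k|h k _]; last exact: h.
by apply: h; rewrite mem_enum.
Qed.

Definition cur (I J : finType) N (g : {ffun I -> {ffun J -> 'I_N}}) : {ffun I * J -> nat} :=
  [ffun t => (g t.1 t.2 : nat)].

Lemma esum_box (I J : finType) (P : pred {ffun I * J -> nat})
  (f : {ffun I * J -> nat} -> R) (B : R) :
  (forall y, 0 <= f y) ->
  (forall N, \sum_(g : {ffun I -> {ffun J -> 'I_N.+1}}) f (cur g) * (P (cur g))%:R <= B) ->
  (\esum_(y in [set y | P y]) (f y)%:E <= B%:E)%E.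
Proof.
move=> f0 hB.
apply: ge_ereal_sup => _ [X [finX XP] <-].
rewrite fsbig_finite //= sumEFin lee_fin.
pose s : seq _ := finmap.enum_fset (fset_set X).
have us0 : uniq s by exact: finmap.fset_uniq.
change (\sum_(y <- s) f y <= B).
have sP : forall y, y \in s -> P y.
  by move=> y; rewrite in_fset_set // inE => /XP.
pose N := (\max_(y <- s) \max_(t : I * J) y t)%N.
pose uncur (y : {ffun I * J -> nat}) : {ffun I -> {ffun J -> 'I_N.+1}} :=
  [ffun b => [ffun j => inord (y (b, j))]].
have cK : {in s, cancel uncur (@cur I J N.+1)}.
  move=> y ys; apply/ffunP => -[b j]; rewrite !ffunE /= inordK // ltnS.
  apply: (leq_trans _ (leq_bigmax_seq _ ys _)) => //.
  exact: (leq_bigmax (b, j)).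
have -> : \sum_(y <- s) f y = \sum_(g <- map uncur s) f (cur g).
  by rewrite big_map; apply: eq_big_seq => y ys; rewrite cK.
have us : uniq (map uncur s).
  rewrite map_inj_in_uniq //.
  by move=> y1 y2 y1s y2s e; rewrite -(cK y1) // -(cK y2) // e.
rewrite big_uniq // (le_trans _ (hB N)) //.
rewrite [leRHS]big_mkcond /= big_mkcond /=; apply: ler_sum => g _.
case: ifP => gs.
  move: gs => /mapP [y ys ->]; rewrite cK // sP // mulr1; exact: lexx.
by rewrite mulr_ge0.
Qed.

Lemma prod_le1 (I : Type) (r : seq I) (P : pred I) (E : I -> R) :
  (forall i, P i -> 0 <= E i <= 1) -> \prod_(i <- r | P i) E i <= 1.
Proof. by move=> h; apply: le_trans (@ler_prod _ _ _ _ E (fun=> 1) h) _; rewrite big1_eq. Qed.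

Lemma prod_pair (A B : finType) (F : A * B -> R) :
  \prod_p F p = \prod_a \prod_b F (a, b).
Proof. by rewrite pair_bigA; apply: eq_bigr => -[a b]. Qed.

Lemma prod_if1 (A : finType) (a0 : A) (x : A -> R) :
  \prod_a (if a == a0 then x a else 1) = x a0.
Proof. by rewrite (bigD1 a0) //= eqxx big1 ?mulr1 // => a /negPf ->. Qed.

Definition wblk n (th0 th1 : R) (S : {set 'I_n}) N m (i : 'I_n) (h : {ffun 'I_m -> 'I_N}) :=
  \prod_j poisson_pmf (comp_rate th0 th1 S i) (h j).

Lemma wblk_ge0 n th0 th1 S N m i h : 0 <= @wblk n th0 th1 S N m i h.
Proof. by apply: prodr_ge0 => j _; exact: poisson_pmf_ge0. Qed.

Lemma pmf_cur n K m N th0 th1 (S : {set 'I_n}) (g : {ffun 'I_n * 'I_K -> {ffun 'I_m -> 'I_N}}) :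
  obs_pmf th0 th1 S (cur g) = \prod_b wblk th0 th1 S b.1 (g b).
Proof.
rewrite /obs_pmf /wblk [LHS]prod_pair; apply: eq_bigr => b _; apply: eq_bigr => j _.
by rewrite ffunE.
Qed.

Lemma stat_cur n K m N (g : {ffun 'I_n * 'I_K -> {ffun 'I_m -> 'I_N}}) i k :
  stat (cur g) i k = (\sum_j (g (i, k) j : nat))%N.
Proof. by rewrite /stat; apply: eq_bigr => j _; rewrite ffunE. Qed.

Lemma err_ind n K m (S : {set 'I_n}) M (y : obs_space n K m) :
  (seq_thresh y M != S)%:R <=
  \sum_i ((i \in S)%:R * \sum_k (M <= stat y i k)%N%:R
          + (i \notin S)%:R * \prod_k (stat y i k < M)%N%:R) :> R.
Proof.
have ge0 : forall i : 'I_n, 0 <= (i \in S)%:R * \sum_k (M <= stat y i k)%N%:R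
          + (i \notin S)%:R * \prod_k (stat y i k < M)%N%:R :> R.
  move=> i; rewrite addr_ge0 // mulr_ge0 //; first by apply: sumr_ge0.
  by apply: prodr_ge0.
case: eqP => [_|ne]; first by rewrite sumr_ge0.
have [i hi] : exists i, (i \in seq_thresh y M) != (i \in S).
  apply/existsP; apply: contraT; rewrite negb_exists => /forallP h.
  by exfalso; apply: ne; apply/setP => i; apply/eqP; move/negPn: (h i).
rewrite (bigD1 i) //= -[leLHS]addr0 lerD //; last by apply: sumr_ge0 => j _; exact: ge0.
move: hi; rewrite seq_threshE inE.
case: (boolP (i \in S)) => iS /=.
  rewrite mul1r mul0r addr0 eqb_id negb_forall => /existsP [k hk].
  rewrite (bigD1 k) //= -[leLHS]addr0 lerD ?sumr_ge0 //.
  by rewrite -leqNgt in hk; rewrite hk.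
rewrite mul0r mul1r add0r eqbF_neg negbK => /forallP h.
by rewrite big1 // => k _; rewrite h.
Qed.

Lemma blockA n K m N (th0 th1 : R) (S : {set 'I_n}) M (i : 'I_n) (k : 'I_K) (z : R) :
  0 < th0 -> 0 < th1 -> 1 <= z -> i \in S ->
  \sum_(g : {ffun 'I_n * 'I_K -> {ffun 'I_m -> 'I_N}})
     obs_pmf th0 th1 S (cur g) * (M <= stat (cur g) i k)%N%:R
  <= (expR (- th1) * expR (th1 * z)) ^+ m / z ^+ M.
Proof.
move=> t0 t1 z1 iS.
pose b0 := (i, k).
pose F (b : 'I_n * 'I_K) (h : {ffun 'I_m -> 'I_N}) := wblk th0 th1 S b.1 h *
   (if b == b0 then (M <= \sum_j (h j : nat))%N%:R else 1).
have e : forall g : {ffun 'I_n * 'I_K -> {ffun 'I_m -> 'I_N}},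
    obs_pmf th0 th1 S (cur g) * (M <= stat (cur g) i k)%N%:R = \prod_b F b (g b).
  move=> g; rewrite pmf_cur stat_cur big_split /=.
  by rewrite (prod_if1 b0 (fun b => (M <= \sum_j (g b j : nat))%N%:R)).
under eq_bigr do rewrite e.
rewrite -bigA_distr_bigA (bigD1 b0) //= -[leRHS]mulr1.
have Fge0 : forall b h, 0 <= F b h.
  by move=> b h; rewrite mulr_ge0 ?wblk_ge0 //; case: ifP.
apply: ler_pM.
- by apply: sumr_ge0 => h _.
- by apply: prodr_ge0 => b _; apply: sumr_ge0 => h _.
- rewrite /F eqxx /wblk /= /comp_rate iS.
  by have := @block_up R 'I_m N M th1 z t1 z1; rewrite card_ord.
- apply: prod_le1 => b /negPf hb; rewrite /F hb.
  under eq_bigr do rewrite mulr1.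
  by rewrite /wblk /comp_rate; case: ifP => _; apply: block_one.
Qed.

Lemma blockB n K m N (th0 th1 : R) (S : {set 'I_n}) M (i : 'I_n) :
  0 < th0 -> 0 < th1 -> (0 < m)%N -> i \notin S ->
  \sum_(t < M) poisson_pmf (m%:R * th0) t <= 1 / 2 ->
  \sum_(g : {ffun 'I_n * 'I_K -> {ffun 'I_m -> 'I_N}})
     obs_pmf th0 th1 S (cur g) * \prod_k (stat (cur g) i k < M)%N%:R
  <= (1 / 2) ^+ K.
Proof.
move=> t0 t1 m0 iS hmed.
pose F (b : 'I_n * 'I_K) (h : {ffun 'I_m -> 'I_N}) := wblk th0 th1 S b.1 h *
   (if b.1 == i then (\sum_j (h j : nat) < M)%N%:R else 1).
have e : forall g : {ffun 'I_n * 'I_K -> {ffun 'I_m -> 'I_N}},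
    obs_pmf th0 th1 S (cur g) * \prod_k (stat (cur g) i k < M)%N%:R = \prod_b F b (g b).
  move=> g; rewrite pmf_cur big_split /=; congr (_ * _).
  rewrite prod_pair /=.
  rewrite (eq_bigr (fun a => if a == i then \prod_k (\sum_j (g (a, k) j : nat) < M)%N%:R else 1)); last first.
    by move=> a _; case: (a == i) => //; rewrite big1.
  rewrite (prod_if1 i (fun a => \prod_k (\sum_j (g (a, k) j : nat) < M)%N%:R)).
  by apply: eq_bigr => k _; rewrite stat_cur.
under eq_bigr do rewrite e.
have Fge0 : forall b h, 0 <= F b h.
  by move=> b h; rewrite mulr_ge0 ?wblk_ge0 //; case: ifP.
rewrite -bigA_distr_bigA prod_pair (bigD1 i) //= -[leRHS]mulr1.
apply: ler_pM.
- by apply: prodr_ge0 => k _; apply: sumr_ge0 => h _.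
- by apply: prodr_ge0 => a _; apply: prodr_ge0 => k _; apply: sumr_ge0 => h _.
- rewrite -[K in (_ ^+ K)]card_ord -prodr_const; apply: ler_prod => k _.
  rewrite sumr_ge0 //=; rewrite /F /= eqxx /wblk /comp_rate (negPf iS).
  apply: le_trans hmed.
  by have := @block_low R 'I_m N M th0 t0; rewrite card_ord; apply.
- apply: prod_le1 => a /negPf ha; apply/andP; split.
    by apply: prodr_ge0 => k _; apply: sumr_ge0 => h _.
  apply: prod_le1 => k _; rewrite /F /= ha.
  under eq_bigr do rewrite mulr1.
  by rewrite /wblk /comp_rate; case: ifP => _; apply: block_one.
Qed.

Lemma obs_pmf_ge0 n K m (th0 th1 : R) S (y : obs_space n K m) : 0 <= obs_pmf th0 th1 S y.
Proof. by apply: prodr_ge0 => t _; exact: poisson_pmf_ge0. Qed.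

Lemma fin_bound n K m N (th0 th1 : R) (S : {set 'I_n}) M (z : R) :
  0 < th0 -> 0 < th1 -> (0 < m)%N -> 1 <= z ->
  \sum_(t < M) poisson_pmf (m%:R * th0) t <= 1 / 2 ->
  \sum_(g : {ffun 'I_n * 'I_K -> {ffun 'I_m -> 'I_N}})
     obs_pmf th0 th1 S (cur g) * (seq_thresh (cur g) M != S)%:R
  <= #|S|%:R * (K%:R * ((expR (- th1) * expR (th1 * z)) ^+ m / z ^+ M))
     + n%:R * (1 / 2) ^+ K.
Proof.
move=> t0 t1 m0 z1 hmed.
set Qa := (expR (- th1) * expR (th1 * z)) ^+ m / z ^+ M.
have Qa0 : 0 <= Qa.
  by rewrite /Qa divr_ge0 ?exprn_ge0 ?mulr_ge0 ?expR_ge0 // (le_trans ler01).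
apply: (@le_trans _ _ (\sum_(g : {ffun 'I_n * 'I_K -> {ffun 'I_m -> 'I_N}})
   obs_pmf th0 th1 S (cur g) * \sum_i ((i \in S)%:R * \sum_k (M <= stat (cur g) i k)%N%:R
          + (i \notin S)%:R * \prod_k (stat (cur g) i k < M)%N%:R))).
  by apply: ler_sum => g _; apply: ler_wpM2l; [exact: obs_pmf_ge0 | exact: err_ind].
under eq_bigr do rewrite mulr_sumr.
rewrite exchange_big /=.
apply: (@le_trans _ _ (\sum_i ((i \in S)%:R * (K%:R * Qa) + (i \notin S)%:R * (1 / 2) ^+ K))).
  apply: ler_sum => i _.
  under eq_bigr do rewrite mulrDr.
  rewrite big_split /=; apply: lerD.
    under eq_bigr do rewrite mulrCA mulr_sumr.
    rewrite -mulr_sumr exchange_big /=.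
    case: (boolP (i \in S)) => iS; last by rewrite !mul0r.
    rewrite !mul1r -[K in K%:R]card_ord -sumr_const.
    rewrite mulr_suml; apply: ler_sum => k _; rewrite mul1r; exact: blockA.
  under eq_bigr do rewrite mulrCA.
  rewrite -mulr_sumr.
  case: (boolP (i \in S)) => iS; first by rewrite !mul0r.
  by rewrite [X in X <= _]mul1r [X in _ <= X]mul1r; apply: blockB.
rewrite big_split /= lerD //.
  rewrite -mulr_suml; apply: ler_wpM2r; first by rewrite mulr_ge0.
  rewrite (eq_bigr (fun i => if i \in S then 1 else 0)); last by move=> i _; case: (i \in S).
  by rewrite -big_mkcond /= sumr_const.
rewrite -mulr_suml; apply: ler_wpM2r; first by rewrite exprn_ge0.
rewrite -[n in n%:R]card_ord -sumr_const; apply: ler_sum => i _.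
by case: (i \notin S).
Qed.
End C.

Section A.
Variable R : realType.

Lemma err_bound n K m (th0 th1 : R) (S : {set 'I_n}) M (z : R) :
  0 < th0 -> 0 < th1 -> (0 < m)%N -> 1 <= z ->
  \sum_(t < M) poisson_pmf (m%:R * th0) t <= 1 / 2 ->
  (@error_prob R n K m th0 th1 S M <=
   (#|S|%:R * (K%:R * ((expR (- th1) * expR (th1 * z)) ^+ m / z ^+ M))
     + n%:R * (1 / 2) ^+ K)%:E)%E.
Proof.
move=> t0 t1 m0 z1 hmed; rewrite /error_prob.
apply: (@esum_box R ('I_n * 'I_K)%type 'I_m (fun y => seq_thresh y M != S)).
  by move=> y; exact: obs_pmf_ge0.
by move=> N; exact: fin_bound.
Qed.

Lemma passesE (x : R) : 0 <= x -> x <= (`|Num.ceil x|%N)%:R < x + 1.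
Proof.
move=> x0; rewrite natr_absz ger0_norm; last by rewrite ceil_ge0 (lt_le_trans _ x0) // ltrN10.
rewrite ceil_ge /=; have := ceilB1_lt x.
by rewrite intrD /= ltrBlDr.
Qed.

Lemma log2_ge1 n : (2 <= n)%N -> 1 <= log2 (n%:R : R).
Proof.
move=> n2; rewrite /log2 ler_pdivlMr ?mul1r; last by rewrite ln_gt0 // ltr1n.
by rewrite ler_ln ?posrE ?ltr0n // ?ler_nat // (leq_trans _ n2).
Qed.

Lemma passes_bounds (eps : R) n : 0 < eps -> (2 <= n)%N ->
  (1 + eps) * log2 (n%:R : R) <= (passes eps n)%:R <= (2 + eps) * log2 (n%:R : R).
Proof.
move=> e0 n2; have l1 := log2_ge1 n2.
have x0 : 0 <= (1 + eps) * log2 (n%:R : R).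
  by apply: mulr_ge0; [lra | exact: le_trans ler01 l1].
case/andP: (passesE x0) => h1 h2; rewrite /passes h1 /=.
apply: (le_trans (ltW h2)); lra.
Qed.

Lemma median_bound (l : R) M : 0 < l -> is_poisson_median l M ->
  expR (- (3 * M%:R)) <= 8 * expR (- (3 / 2 * l)).
Proof.
move=> l0 [hm1 _]; have hmed := med_low l0 hm1.
set u := expR (- l) * expR (l * expR (-1)).
have e2 : expR (-1) <= 1 / 2 :> R.
  rewrite expRN div1r lef_pV2 ?posrE ?expR_gt0 //; have := expR_ge1Dx (1 : R); lra.
have hu : u <= expR (- (l / 2)).
  rewrite /u -expRD ler_expR; nra.
have eM : expR (- M%:R) <= 2 * u.
  rewrite expRN -div1r ler_pdivrMr ?expR_gt0 //.
  have u0 : 0 < u by rewrite /u mulr_gt0 ?expR_gt0.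
  rewrite -mulrA [u * _]mulrC; move: hmed; set p := expR M%:R * u; lra.
have : expR (- M%:R) ^+ 3 <= (2 * expR (- (l / 2))) ^+ 3.
  apply: lerXn2r; rewrite ?nnegrE ?expR_ge0 ?mulr_ge0 ?expR_ge0 //.
  apply: (le_trans eM); rewrite ler_pM2l //.
rewrite -expRM_natl exprMn -expRM_natl.
have -> : (3%:R * - M%:R) = - (3 * M%:R) :> R by rewrite mulrN.
have -> : (3%:R * - (l / 2)) = - (3 / 2 * l) :> R by field.
move=> h; apply: (le_trans h); set q := expR _; have -> : (2 : R) ^+ 3 = 8 by rewrite !exprS expr0; lra.
lra.
Qed.

Lemma t2_bound (eps : R) n K : 0 < eps -> (2 <= n)%N ->
  (1 + eps) * log2 (n%:R : R) <= K%:R ->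
  n%:R * (1 / 2) ^+ K <= expR (- (eps * ln (n%:R : R))).
Proof.
move=> e0 n2 hK.
have ln2p : 0 < ln (2 : R) by rewrite ln_gt0 // ltr1n.
have n0 : 0 < (n%:R : R) by rewrite ltr0n (leq_trans _ n2).
have -> : (1 / 2 : R) = expR (- ln 2) by rewrite expRN lnK ?posrE // div1r.
rewrite -expRM_natl -{1}(lnK n0) -expRD ler_expR.
move: hK; rewrite /log2 mulrA ler_pdivrMr //.
set a := ln _; set b := ln _; set k := K%:R; nra.
Qed.

Lemma t1_bound (eps C y lam : R) (s K M : nat) : 0 < eps -> 0 <= C -> 1 <= y ->
  K%:R <= (2 + eps) * y ->
  expR (- (3 * M%:R)) <= 8 * expR (- (3 / 2 * lam)) ->
  ((0 < s)%N -> ln (s%:R * y) < lam) ->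
  s%:R * (K%:R * (C / expR 3 ^+ M)) <= 8 * C * (2 + eps) * expR (- (1 / 2 * ln y)).
Proof.
move=> e0 C0 y1 hK hM hl.
have y0 : 0 < y by apply: lt_le_trans y1.
have RHS0 : 0 <= 8 * C * (2 + eps) * expR (- (1 / 2 * ln y)).
  by rewrite !mulr_ge0 ?expR_ge0 //; lra.
case: (posnP s) => [->|s0]; first by rewrite mul0r.
have hl' := hl s0.
set x := s%:R * y.
have sr : 1 <= (s%:R : R) by rewrite ler1n.
have x0 : 0 < x by rewrite /x mulr_gt0 // (lt_le_trans ltr01).
have yx : y <= x by rewrite /x ler_peMl // ltW.
rewrite -expRM_natl -expRN mulrC.
set E := expR (- _).
have E0 : 0 <= E by exact: expR_ge0.
apply: (@le_trans _ _ (s%:R * C * ((2 + eps) * y * (8 * expR (- (3 / 2 * ln x)))))).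
  have -> : K%:R * (C * E) * s%:R = (s%:R * C) * (K%:R * E) by ring.
  rewrite ler_wpM2l //; first by rewrite mulr_ge0 // (le_trans ler01).
  apply: ler_pM => //.
  have -> : E = expR (- (3 * M%:R)) by rewrite /E mulrC.
  apply: (le_trans hM); rewrite ler_pM2l // ler_expR; lra.
all: try done.
have h3 : x * expR (- (3 / 2 * ln x)) = expR (- (1 / 2 * ln x)).
  rewrite -{1}(lnK x0) -expRD; congr expR; lra.
have h4 : expR (- (1 / 2 * ln x)) <= expR (- (1 / 2 * ln y)).
  by rewrite ler_expR lerN2 ler_pM2l // ler_ln ?posrE.
have h5 : s%:R * C * ((2 + eps) * y * (8 * expR (- (3 / 2 * ln x))))
  = 8 * C * (2 + eps) * (x * expR (- (3 / 2 * ln x))) by rewrite /x; ring.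
have h6 : s%:R * C * ((2 + eps) * y * (8 * expR (- (3 / 2 * ln x))))
   <= 8 * C * (2 + eps) * expR (- (1 / 2 * ln y)).
  rewrite h5 h3 ler_wpM2l //.
  by rewrite !mulr_ge0 //; lra.
exact: h6.
Qed.

Lemma cvg_ln_mul (u : nat -> R) (c : R) : 0 < c -> u @ \oo --> +oo ->
  (fun n => c * ln (u n)) @ \oo --> +oo.
Proof.
move=> c0 /cvgryPge hu; apply/cvgryPge => A.
move: (hu (expR (A / c))); apply: filterS => n hn.
have un : 0 < u n by apply: lt_le_trans hn; exact: expR_gt0.
rewrite -ler_pdivrMl // mulrC.
by rewrite -[X in X <= _](expRK (A / c)) ler_ln ?posrE ?expR_gt0.
Qed.

Lemma cvg_B (eps C : R) : 0 < eps ->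
  (fun n : nat => C * expR (- (1 / 2 * ln (log2 (n%:R : R)))) + expR (- (eps * ln (n%:R : R))))
    @ \oo --> 0.
Proof.
move=> e0.
have hlog : (fun n : nat => log2 (n%:R : R)) @ \oo --> +oo.
  have -> : (fun n : nat => log2 (n%:R : R)) = (fun n => (ln (2 : R))^-1 * ln (n%:R : R)).
    by apply/funext => n; rewrite /log2 mulrC.
  apply: cvg_ln_mul; last exact: cvgr_idn.
  by rewrite invr_gt0 ln_gt0 // ltr1n.
have h1 := cvg_comp _ _ (@cvg_ln_mul _ (1 / 2) ltac:(lra) hlog) (@cvgr_expR R).
have h2 := cvg_comp _ _ (@cvg_ln_mul _ eps e0 (@cvgr_idn R)) (@cvgr_expR R).
rewrite -[0]addr0 -[X in X + 0](mulr0 C).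
apply: cvgD; last exact: h2.
by apply: cvgMl_tmp; exact: h1.
Qed.
End A.

Unset Implicit Arguments.

Theorem corollary6 (R : realType) (m : nat) (th1 eps : R) (th0 : nat -> R)
  (s : nat -> nat) (S : forall n : nat, {set 'I_n}) (M : nat -> nat) :
  (0 < m)%N -> 0 < th1 -> 0 < eps ->
  (forall n, #|S n| = s n) ->
  (forall n, th1 < th0 n) ->
  (forall n, is_poisson_median (m%:R * th0 n) (M n)) ->
  (\forall n \near \oo, (ln ((s n)%:R * log2 (n%:R : R)) + 1) / m%:R < th0 n) ->
  (fun n => @error_prob R n (passes eps n) m (th0 n) th1 (S n) (M n))
    @ \oo --> 0%E.
Proof.
move=> m0 t1 e0 hs hth hmed hnear.
pose z : R := expR 3.
have z1 : 1 <= z by rewrite /z; have := expR_ge1Dx (3 : R); lra.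
pose C1 := (expR (- th1) * expR (th1 * z)) ^+ m.
have C10 : 0 <= C1 by rewrite /C1 exprn_ge0 // mulr_ge0 ?expR_ge0.
pose B n := 8 * C1 * (2 + eps) * expR (- (1 / 2 * ln (log2 (n%:R : R))))
   + expR (- (eps * ln (n%:R : R))).
have hB := cvg_B (8 * C1 * (2 + eps)) e0.
apply: (@squeeze_cvge nat _ _ R (fun=> 0%E) (fun n => @error_prob R n (passes eps n) m (th0 n) th1 (S n) (M n)) (fun n => (B n)%:E)); last 2 first.
- exact: cvg_cst.
- by apply: cvg_EFin; [exact: nearW | exact: hB].
move: hnear; apply: filterS2 (nbhs_infty_ge 2) => n n2 hl.
apply/andP; split.
  by apply: esum_ge0 => y _; rewrite lee_fin; exact: obs_pmf_ge0.
have m0R : 0 < (m%:R : R) by rewrite ltr0n.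
have t0 : 0 < th0 n by apply: lt_trans (hth n).
have hmed' : \sum_(t < M n) poisson_pmf (m%:R * th0 n) t <= 1 / 2.
  by case: (hmed n) => _ h; lra.
apply: (le_trans (err_bound (passes eps n) (S n) t0 t1 m0 z1 hmed')).
rewrite lee_fin; apply: lerD.
  have [pb1 pb2] := andP (passes_bounds e0 n2).
  have mb := median_bound (mulr_gt0 m0R t0) (hmed n).
  apply: (t1_bound e0 C10 (@log2_ge1 R n n2) pb2 mb (s := #|S n|)).
  move=> _; rewrite hs.
  move: hl; rewrite ltr_pdivrMr // [th0 n * _]mulrC => hl.
  lra.
have [pb1 pb2] := andP (passes_bounds e0 n2).
exact: t2_bound.
Qed.
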